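(* Let $A\in\mathbb R^{n\times n}$ be Hurwitz and consider a subsystem whose measurement output is its full state, $y=x$, with $G_{yu}(s)=(sI-A)^{-1}B$ and $G_{yv}(s)=(sI-A)^{-1}L$ (state equation $\dot x=Ax+Bu+Lv$), and with all blocks of the subsystem in $\mathcal{RH}_\infty$. Let $P,\overline P,P^\dagger,\overline P^\dagger$ satisfy $PP^\dagger=I$, $\overline P\,\overline P^\dagger=I$, (C1) $P^\dagger P+\overline P^\dagger\overline P=I_n$, (C2) $PAP^\dagger$ and $\overline PA\overline P^\dagger$ Hurwitz, (C3) $PL=0$ and $\overline PL$ nonsingular, and let $X(s):=P-(sI-PAP^\dagger)^{-1}PA\overline P^\dagger\overline P$. Then a controller $u=Kx$ is an output-rectifying retrofit controller if and only if $K=\hat KX$, where $\hat K$ is a stabilizing controller for $\hat G_{\xi u}(s):=(sI-PAP^\dagger)^{-1}PB$.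
   Context: $\mathcal{RH}_\infty$ denotes the set of stable, proper, real rational transfer matrices; a square real matrix is Hurwitz if all eigenvalues have negative real part. For a subsystem with interaction input $v$, control input $u$ and measurement output $y$, a controller $u=Ky$ is an output-rectifying retrofit controller if $K=(I+QG_{yu})^{-1}Q$ for some $Q\in\mathcal{RH}_\infty$ with $Q\,G_{yv}=0$. For transfer matrices $H$ and $C$, $C$ is a stabilizing controller for $H$ if the positive feedback loop $y=Hu$, $u=Cy$ is internally stable. *)

(* Defs.v *)
From HB Require Import structures.
From mathcomp Require Import all_boot all_order all_algebra.
Set Implicit Arguments. Unset Strict Implicit. Unset Printing Implicit Defensive.
Import Order.TTheory GRing.Theory Num.Theory.
Local Open Scope ring_scope.

(* C : numClosedFieldType plays the role of the complex numbers;
   "real" means Num.real elements of C.  Transfer matrices are matrices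
   over the field of rational functions F = {fraction {poly C}}. *)

Definition rfun (C : numClosedFieldType) := {fraction {poly C}}.

Definition cst (C : numClosedFieldType) (c : C) : rfun C :=
  FracField.tofrac (c%:P).
Definition svar (C : numClosedFieldType) : rfun C := FracField.tofrac 'X.

Definition cst_mx (C : numClosedFieldType) m n (A : 'M[C]_(m, n)) : 'M[rfun C]_(m, n) :=
  map_mx (@cst C) A.

Definition resolvent (C : numClosedFieldType) n (A : 'M[C]_n) : 'M[rfun C]_n :=
  invmx ((svar C)%:M - cst_mx A).

Definition real_poly (C : numClosedFieldType) (p : {poly C}) : Prop :=
  forall i, p`_i \is Num.real.

Definition real_mx (C : numClosedFieldType) m n (A : 'M[C]_(m, n)) : Prop :=
  forall i j, A i j \is Num.real.

Definition RHinf (C : numClosedFieldType) (f : rfun C) : Prop :=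
  exists p q : {poly C},
    [/\ q != 0, f = FracField.tofrac p / FracField.tofrac q,
        (size p <= size q)%N, real_poly p /\ real_poly q &
        forall z : C, root q z -> 'Re z < 0].

Definition RHinf_mx (C : numClosedFieldType) m n (M : 'M[rfun C]_(m, n)) : Prop :=
  forall i j, RHinf (M i j).

Definition hurwitz (C : numClosedFieldType) n (A : 'M[C]_n) : Prop :=
  forall z : C, eigenvalue A z -> 'Re z < 0.

(* C is a stabilizing controller for H: the positive feedback loop
   y = H u + d1, u = Cc y + d2 is well-posed and all closed-loop maps
   (d1,d2) -> (y,u) are in RH_infinity. *)
Definition stabilizing (C : numClosedFieldType) p m
  (H : 'M[rfun C]_(p, m)) (Cc : 'M[rfun C]_(m, p)) : Prop :=
  let M : 'M[rfun C]_(p + m) := block_mx 1%:M (- H) (- Cc) 1%:M in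
  M \in unitmx /\ RHinf_mx (invmx M).

Definition ORRC (C : numClosedFieldType) ny nu nv
  (Gyu : 'M[rfun C]_(ny, nu)) (Gyv : 'M[rfun C]_(ny, nv))
  (K : 'M[rfun C]_(nu, ny)) : Prop :=
  exists Q : 'M[rfun C]_(nu, ny),
    [/\ RHinf_mx Q, Q *m Gyv = 0, (1%:M + Q *m Gyu) \in unitmx &
        K = invmx (1%:M + Q *m Gyu) *m Q].

(* Main.v *)
Require Import Defs.
From HB Require Import structures.
From mathcomp Require Import all_boot all_order all_algebra.
From mathcomp Require Import zify.
Import Order.TTheory GRing.Theory Num.Theory.
Local Open Scope ring_scope.

Lemma predle a b c : (a <= c)%N -> ((a + b).-1 <= (c + b).-1)%N.
Proof. lia. Qed.
Lemma predle2 a b c d : (a <= c)%N -> (b <= d)%N -> ((a + b).-1 <= (c + d).-1)%N.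
Proof. lia. Qed.

Section RH.
Variable C : numClosedFieldType.
Local Notation F := (rfun C).
Local Notation tf := (@FracField.tofrac {poly C}).
Implicit Types p q : {poly C}.
Implicit Types f g : F.

Lemma real_polyD p q : real_poly p -> real_poly q -> real_poly (p + q).
Proof. by move=> hp hq i; rewrite coefD; apply: rpredD. Qed.
Lemma real_polyN p : real_poly p -> real_poly (- p).
Proof. by move=> hp i; rewrite coefN realN. Qed.
Lemma real_polyM p q : real_poly p -> real_poly q -> real_poly (p * q).
Proof.
move=> hp hq i; rewrite coefM; apply: rpred_sum => j _; exact: rpredM.
Qed.
Lemma real_polyC (c : C) : c \is Num.real -> real_poly c%:P.
Proof. by move=> hc i; rewrite coefC; case: eqP => _ //; apply: real0. Qed.
Lemma real_polyX : real_poly ('X : {poly C}).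
Proof. by move=> i; rewrite coefX; apply: realn. Qed.
Lemma real_polyMn p k : real_poly p -> real_poly (p *+ k).
Proof. by move=> hp i; rewrite coefMn; apply: rpredMn. Qed.
Lemma real_poly1 : real_poly (1 : {poly C}).
Proof. by rewrite -polyC1; apply: real_polyC; apply: real1. Qed.
Lemma real_poly0 : real_poly (0 : {poly C}).
Proof. by move=> i; rewrite coef0 real0. Qed.
Lemma real_polysign k : real_poly ((-1) ^+ k : {poly C}).
Proof.
elim: k => [|k IH]; first exact: real_poly1.
by rewrite exprS; apply: real_polyM => //; apply: real_polyN; apply: real_poly1.
Qed.

Lemma RHinf0 : RHinf (0 : F).
Proof.
exists 0, 1; split => //; first exact: oner_neq0.
- by rewrite tofrac0 mul0r.
- by rewrite size_poly0.
- by split; [apply: real_poly0 | apply: real_poly1].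
- by move=> z; rewrite (negbTE (root1 z)).
Qed.

Lemma RHinf_cst (c : C) : c \is Num.real -> RHinf (cst c).
Proof.
move=> hc; exists c%:P, 1; split => //; first exact: oner_neq0.
- by rewrite tofrac1 invr1 mulr1.
- by rewrite size_poly1 size_polyC_leq1.
- by split; [apply: real_polyC | apply: real_poly1].
- by move=> z; rewrite (negbTE (root1 z)).
Qed.

Lemma RHinf1 : RHinf (1 : F).
Proof. by have := @RHinf_cst 1 (real1 C); rewrite /cst tofrac1. Qed.

Lemma RHinfD f g : RHinf f -> RHinf g -> RHinf (f + g).
Proof.
move=> [p1 [q1 [nq1 -> s1 [r1 r1'] h1]]] [p2 [q2 [nq2 -> s2 [r2 r2'] h2]]].
exists (p1 * q2 + p2 * q1), (q1 * q2); split.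
- by rewrite mulf_neq0.
- rewrite addf_div ?tofrac_eq0 // tofracD !tofracM //.
- rewrite size_mul //; apply: leq_trans (size_polyD _ _) _.
  rewrite geq_max; apply/andP; split; apply: leq_trans (size_polyMleq _ _) _;
  [exact: predle | rewrite [(size q1 + _)%N]addnC; exact: predle].
- by split; [apply: real_polyD; apply: real_polyM | apply: real_polyM].
- by move=> z; rewrite rootM => /orP [/h1|/h2].
Qed.

Lemma RHinfN f : RHinf f -> RHinf (- f).
Proof.
move=> [p1 [q1 [nq1 -> s1 [r1 r1'] h1]]].
exists (- p1), q1; split => //.
- by rewrite tofracN mulNr.
- by rewrite size_polyN.
- by split => //; apply: real_polyN.
Qed.

Lemma RHinfM f g : RHinf f -> RHinf g -> RHinf (f * g).
Proof.
move=> [p1 [q1 [nq1 -> s1 [r1 r1'] h1]]] [p2 [q2 [nq2 -> s2 [r2 r2'] h2]]].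
exists (p1 * p2), (q1 * q2); split.
- by rewrite mulf_neq0.
- by rewrite mulf_div !tofracM.
- rewrite (size_mul nq1 nq2); apply: leq_trans (size_polyMleq _ _) _.
  exact: predle2.
- by split; apply: real_polyM.
- by move=> z; rewrite rootM => /orP [/h1|/h2].
Qed.

Lemma RHinf_sum (I : Type) (s : seq I) (Pr : pred I) (G : I -> F) :
  (forall i, Pr i -> RHinf (G i)) -> RHinf (\sum_(i <- s | Pr i) G i).
Proof. by move=> h; apply: big_ind => //; [apply: RHinf0 | apply: RHinfD]. Qed.

End RH.
Section RHmx.
Variable C : numClosedFieldType.
Local Notation F := (rfun C).
Local Notation tf := (@FracField.tofrac {poly C}).

Lemma RHinf_mxM m n p (A : 'M[F]_(m,n)) (B : 'M[F]_(n,p)) :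
  RHinf_mx A -> RHinf_mx B -> RHinf_mx (A *m B).
Proof. move=> hA hB i j; rewrite mxE; apply: RHinf_sum => k _; exact: RHinfM. Qed.
Lemma RHinf_mxD m n (A B : 'M[F]_(m,n)) :
  RHinf_mx A -> RHinf_mx B -> RHinf_mx (A + B).
Proof. move=> hA hB i j; rewrite mxE; exact: RHinfD. Qed.
Lemma RHinf_mxN m n (A : 'M[F]_(m,n)) : RHinf_mx A -> RHinf_mx (- A).
Proof. move=> hA i j; rewrite mxE; exact: RHinfN. Qed.
Lemma RHinf_mx_cst m n (M : 'M[C]_(m,n)) : real_mx M -> RHinf_mx (cst_mx M).
Proof. move=> h i j; rewrite mxE; exact: RHinf_cst. Qed.
Lemma RHinf_mx1 n : RHinf_mx (1%:M : 'M[F]_n).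
Proof.
move=> i j; rewrite mxE; case: (i == j) => /=.
  by rewrite mulr1n; apply: RHinf1.
by rewrite mulr0n; apply: RHinf0.
Qed.
Lemma RHinf_mx_block m1 m2 n1 n2 (A : 'M[F]_(m1,n1)) (B : 'M[F]_(m1,n2))
  (Cc : 'M[F]_(m2,n1)) (D : 'M[F]_(m2,n2)) :
  RHinf_mx A -> RHinf_mx B -> RHinf_mx Cc -> RHinf_mx D ->
  RHinf_mx (block_mx A B Cc D).
Proof.
move=> hA hB hC hD i j; rewrite -(splitK i) -(splitK j).
case: (split i) => a; case: (split j) => b /=.
- by rewrite block_mxEul.
- by rewrite block_mxEur.
- by rewrite block_mxEdl.
- by rewrite block_mxEdr.
Qed.
Lemma RHinf_mx_dl m1 m2 n1 n2 (M : 'M[F]_(m1 + m2, n1 + n2)) :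
  RHinf_mx M -> RHinf_mx (dlsubmx M).
Proof. by move=> h i j; rewrite !mxE; apply: h. Qed.

Lemma size_prod_le k (f : 'I_k -> {poly C}) :
  (forall i, size (f i) <= 2)%N -> (size (\prod_(i < k) f i)%R <= k.+1)%N.
Proof.
move=> hf.
have : (size (\prod_(i < k) f i)%R <= (\sum_(i < k) 1).+1)%N.
  apply: (big_ind2 (fun (p : {poly C}) (m : nat) => is_true (size p <= m.+1)%N)).
  - by rewrite size_poly1.
  - move=> p1 a p2 b h1 h2; apply: leq_trans (size_polyMleq _ _) _.
    move: h1 h2; lia.
  - by move=> i _; apply: hf.
by rewrite sum1_card card_ord.
Qed.

Lemma size_det_le k (M : 'M[{poly C}]_k) :
  (forall i j, size (M i j) <= 2)%N -> (size (\det M)%R <= k.+1)%N.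
Proof.
move=> hM; rewrite /determinant.
apply: leq_trans (size_sum _ _ _) _; apply/bigmax_leqP => s _.
rewrite size_Msign; apply: size_prod_le => i; exact: hM.
Qed.

Lemma real_poly_det k (M : 'M[{poly C}]_k) :
  (forall i j, real_poly (M i j)) -> real_poly (\det M).
Proof.
move=> hM; rewrite /determinant.
apply: (big_ind (@real_poly C)); [exact: real_poly0 | exact: real_polyD |].
move=> s _; apply: real_polyM; first exact: real_polysign.
apply: (big_ind (@real_poly C)); [exact: real_poly1 | exact: real_polyM |].
by move=> i _; apply: hM.
Qed.

Lemma char_poly_mx_size k (A : 'M[C]_k) i j : (size (char_poly_mx A i j) <= 2)%N.
Proof.
rewrite !mxE; apply: leq_trans (size_polyD _ _) _; rewrite geq_max size_polyN.
rewrite (leq_trans (size_polyC_leq1 _)) // andbT.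
by case: (i == j); rewrite ?mulr1n ?mulr0n ?size_polyX ?size_poly0.
Qed.

Lemma char_poly_mx_real k (A : 'M[C]_k) i j : real_mx A -> real_poly (char_poly_mx A i j).
Proof.
move=> hA; rewrite !mxE; apply: real_polyD; last by apply: real_polyN; apply: real_polyC.
by apply: real_polyMn; apply: real_polyX.
Qed.

Lemma resolventE k (A : 'M[C]_k) :
  (svar C)%:M - cst_mx A = map_mx tf (char_poly_mx A).
Proof.
apply/matrixP => i j; rewrite !mxE rmorphB rmorphMn /=.
by [].
Qed.

Lemma RHinf_resolvent k (A : 'M[C]_k) :
  real_mx A -> hurwitz A -> RHinf_mx (resolvent A).
Proof.
move=> hr hh i j.
have chi0 : char_poly A != 0 by apply: monic_neq0; apply: char_poly_monic.
have u : map_mx tf (char_poly_mx A) \in unitmx.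
  by rewrite unitmxE det_map_mx unitfE tofrac_eq0.
rewrite /resolvent resolventE /invmx u -map_mx_adj det_map_mx !mxE mulrC.
exists (\adj (char_poly_mx A) i j), (char_poly A); split => //.
- by rewrite [in RHS]mxE.
- rewrite (size_char_poly A) !mxE /cofactor size_Msign.
  apply: (@leq_trans k.-1.+1); last by clear; lia.
  apply: size_det_le => a b.
  by have := @char_poly_mx_size k A (lift j a) (lift i b); rewrite !mxE.
- split; last first.
    by apply: real_poly_det => a b; apply: char_poly_mx_real.
  rewrite !mxE /cofactor; apply: real_polyM; first exact: real_polysign.
  apply: real_poly_det => a b.
  by have := @char_poly_mx_real k A (lift j a) (lift i b) hr; rewrite !mxE.
- by move=> z hz; apply: hh; rewrite eigenvalue_root_char.
Qed.

End RHmx.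
Section Alg.
Variable C : numClosedFieldType.
Local Notation F := (rfun C).
Local Notation tf := (@FracField.tofrac {poly C}).

Lemma cst_mxE m n (M : 'M[C]_(m, n)) : cst_mx M = map_mx tf (map_mx polyC M).
Proof. by apply/matrixP => i j; rewrite !mxE. Qed.
Lemma cst_mxM m n p (M : 'M[C]_(m, n)) (N : 'M[C]_(n, p)) :
  cst_mx (M *m N) = cst_mx M *m cst_mx N.
Proof. by rewrite !cst_mxE !map_mxM. Qed.
Lemma cst_mxD m n (M N : 'M[C]_(m, n)) : cst_mx (M + N) = cst_mx M + cst_mx N.
Proof. by rewrite !cst_mxE !map_mxD. Qed.
Lemma cst_mxN m n (M : 'M[C]_(m, n)) : cst_mx (- M) = - cst_mx M.
Proof. by rewrite !cst_mxE !map_mxN. Qed.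
Lemma cst_mxB m n (M N : 'M[C]_(m, n)) : cst_mx (M - N) = cst_mx M - cst_mx N.
Proof. by rewrite cst_mxD cst_mxN. Qed.
Lemma cst_mx0 m n : cst_mx (0 : 'M[C]_(m, n)) = 0.
Proof. by rewrite !cst_mxE !map_mx0. Qed.
Lemma cst_mx1 n : cst_mx (1%:M : 'M[C]_n) = 1%:M.
Proof. by rewrite !cst_mxE !map_mx1. Qed.

Lemma sI_unit k (A : 'M[C]_k) : (svar C)%:M - cst_mx A \in unitmx.
Proof.
have chi0 : char_poly A != 0 by apply: monic_neq0; apply: char_poly_monic.
by rewrite resolventE unitmxE det_map_mx unitfE tofrac_eq0.
Qed.

Lemma real_mxM m n p (M : 'M[C]_(m, n)) (N : 'M[C]_(n, p)) :
  real_mx M -> real_mx N -> real_mx (M *m N).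
Proof. by move=> hM hN i j; rewrite mxE; apply: rpred_sum => k _; apply: rpredM. Qed.

End Alg.
Theorem proposition6 (C : numClosedFieldType) (n m q r : nat)
  (A : 'M[C]_n) (B : 'M[C]_(n, m)) (L : 'M[C]_(n, q))
  (P : 'M[C]_(r, n)) (Pd : 'M[C]_(n, r))
  (Pb : 'M[C]_(q, n)) (Pbd : 'M[C]_(n, q)) :
  real_mx A -> real_mx B -> real_mx L ->
  real_mx P -> real_mx Pd -> real_mx Pb -> real_mx Pbd ->
  hurwitz A ->
  RHinf_mx (resolvent A *m cst_mx B) ->
  RHinf_mx (resolvent A *m cst_mx L) ->
  P *m Pd = 1%:M ->
  Pb *m Pbd = 1%:M ->
  Pd *m P + Pbd *m Pb = 1%:M ->
  hurwitz (P *m A *m Pd) ->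
  hurwitz (Pb *m A *m Pbd) ->
  P *m L = 0 ->
  Pb *m L \in unitmx ->
  let X := cst_mx P
           - resolvent (P *m A *m Pd) *m cst_mx (P *m A *m Pbd *m Pb) in
  let Ghat := resolvent (P *m A *m Pd) *m cst_mx (P *m B) in
  forall K : 'M[rfun C]_(m, n),
    ORRC (resolvent A *m cst_mx B) (resolvent A *m cst_mx L) K <->
    exists Khat : 'M[rfun C]_(m, r), stabilizing Ghat Khat /\ K = Khat *m X.
Proof.
move=> hA hB hL hP hPd hPb hPbd hurA hGB hGL PPd PbPbd C1 hurAh hurAb PL PbLu X Ghat K.
have uA : ((svar C)%:M - cst_mx A) \in unitmx := @sI_unit C n A.
have uAh : ((svar C)%:M - cst_mx (P *m A *m Pd)) \in unitmx := @sI_unit C r _.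
have PdP : Pd *m P = 1%:M - Pbd *m Pb by rewrite -C1 addrK.
have LE : L = Pbd *m (Pb *m L).
  by rewrite mulmxA -[L in LHS]mul1mx -C1 mulmxDl -mulmxA PL mulmx0 add0r.
have PbdE : Pbd = L *m invmx (Pb *m L) by rewrite {1}LE -mulmxA (mulmxV PbLu) mulmx1.
have c1 : Pd *m (P *m A *m Pd) = A *m Pd - Pbd *m Pb *m A *m Pd.
  by rewrite !mulmxA PdP !mulmxBl mul1mx.
have c2 : P *m A *m Pd *m P = P *m A - P *m A *m Pbd *m Pb.
  have e : P *m A *m (Pd *m P + Pbd *m Pb) = P *m A by rewrite C1 mulmx1.
  rewrite mulmxDr !mulmxA in e.
  by apply/eqP; rewrite eq_sym subr_eq e.
have F1 : ((svar C)%:M - cst_mx (P *m A *m Pd)) *m cst_mx P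
          = cst_mx P *m ((svar C)%:M - cst_mx A) + cst_mx (P *m A *m Pbd *m Pb).
  rewrite mulmxBl mulmxBr mul_scalar_mx mul_mx_scalar -!cst_mxM c2 cst_mxB.
  by rewrite opprD opprK addrA.
have F2 : cst_mx Pd *m ((svar C)%:M - cst_mx (P *m A *m Pd))
          = ((svar C)%:M - cst_mx A) *m cst_mx Pd + cst_mx (Pbd *m Pb *m A *m Pd).
  rewrite mulmxBl mulmxBr mul_scalar_mx mul_mx_scalar -!cst_mxM c1 cst_mxB.
  by rewrite opprD opprK addrA.
have X1 : X = invmx ((svar C)%:M - cst_mx (P *m A *m Pd))
              *m (cst_mx P *m ((svar C)%:M - cst_mx A)).
  rewrite (_ : cst_mx P *m _ = ((svar C)%:M - cst_mx (P *m A *m Pd)) *m cst_mx P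
               - cst_mx (P *m A *m Pbd *m Pb)); last by rewrite F1 addrK.
  by rewrite mulmxBr mulmxA (mulVmx uAh) mul1mx.
have X2 : X *m resolvent A = resolvent (P *m A *m Pd) *m cst_mx P.
  by rewrite X1 -!mulmxA /resolvent (mulmxV uA) mulmx1.
have X3 : X *m (resolvent A *m cst_mx B) = Ghat.
  by rewrite mulmxA X2 -mulmxA -cst_mxM.
have X4 : X *m (resolvent A *m cst_mx L) = 0.
  by rewrite mulmxA X2 -mulmxA -cst_mxM PL cst_mx0 mulmx0.
have Q1 : forall Q : 'M[rfun C]_(m, n), Q *m (resolvent A *m cst_mx L) = 0 ->
    Q = (Q *m cst_mx Pd) *m X.
  move=> Q hQL.
  have e : Q *m resolvent A *m cst_mx Pbd = 0.
    by rewrite PbdE cst_mxM mulmxA -(mulmxA Q) hQL mul0mx.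
  have a : Q *m resolvent A = Q *m resolvent A *m cst_mx Pd *m cst_mx P.
    rewrite -{1}[Q *m resolvent A]mulmx1 -cst_mx1 -C1 cst_mxD mulmxDr !cst_mxM.
    by rewrite !mulmxA e mul0mx addr0.
  have b0 : Q *m resolvent A *m cst_mx Pd *m ((svar C)%:M - cst_mx (P *m A *m Pd))
            = Q *m cst_mx Pd.
    rewrite -mulmxA F2 mulmxDr mulmxA -(mulmxA Q) /resolvent (mulVmx uA) mulmx1.
    by rewrite !cst_mxM !mulmxA e !mul0mx addr0.
  have b : Q *m resolvent A *m cst_mx Pd
           = Q *m cst_mx Pd *m invmx ((svar C)%:M - cst_mx (P *m A *m Pd)).
    by rewrite -b0 (mulmxK uAh).
  by rewrite X1 !mulmxA -b -a /resolvent (mulmxKV uA).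
have rAh : real_mx (P *m A *m Pd) by apply: real_mxM => //; apply: real_mxM.
have hR : RHinf_mx (resolvent (P *m A *m Pd)) by apply: RHinf_resolvent.
have hX : RHinf_mx X.
  apply: RHinf_mxD; first exact: RHinf_mx_cst.
  apply: RHinf_mxN; apply: RHinf_mxM => //; apply: RHinf_mx_cst.
  by apply: real_mxM => //; apply: real_mxM => //; apply: real_mxM.
have hG : RHinf_mx Ghat.
  by apply: RHinf_mxM => //; apply: RHinf_mx_cst; apply: real_mxM.
clearbody X Ghat.
split.
- case=> Q [hQ hQL hu ->].
  have QE := Q1 Q hQL.
  have QG : Q *m (resolvent A *m cst_mx B) = (Q *m cst_mx Pd) *m Ghat.
    by rewrite {1}QE -mulmxA X3.
  have hQh : RHinf_mx (Q *m cst_mx Pd) by apply: RHinf_mxM => //; apply: RHinf_mx_cst.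
  move: hu; rewrite QG => hu.
  exists (invmx (1%:M + Q *m cst_mx Pd *m Ghat) *m (Q *m cst_mx Pd)).
  split; last by rewrite -[RHS]mulmxA -QE.
  move: hQh hu; set Qh := Q *m cst_mx Pd; set U := 1%:M + Qh *m Ghat => hQh hU.
  clearbody Qh.
  set Kh := invmx U *m Qh.
  set N := block_mx (1%:M + Ghat *m Qh) (Ghat + Ghat *m Qh *m Ghat) Qh U.
  have MN : block_mx 1%:M (- Ghat) (- Kh) 1%:M *m N = 1%:M.
    rewrite /N mulmx_block (scalar_mx_block r m 1); congr block_mx.
    + by rewrite mul1mx mulNmx addrK.
    + by rewrite mul1mx mulNmx /U mulmxDr mulmx1 mulmxA subrr.
    + have e : Qh *m (1%:M + Ghat *m Qh) = U *m Qh.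
        by rewrite mulmxDr mulmx1 /U mulmxDl mul1mx mulmxA.
      by rewrite mulNmx mul1mx /Kh -[invmx U *m Qh *m _]mulmxA e (mulKmx hU) addNr.
    + have e : Qh *m (Ghat + Ghat *m Qh *m Ghat) = U *m (Qh *m Ghat).
        by rewrite mulmxDr /U mulmxDl mul1mx !mulmxA.
      by rewrite mulNmx mul1mx /Kh -[invmx U *m Qh *m _]mulmxA e (mulKmx hU) /U addrC addrK.
  have [Mu _] := mulmx1_unit MN.
  rewrite /stabilizing /=; split => //.
  have -> : invmx (block_mx 1%:M (- Ghat) (- Kh) 1%:M) = N.
    by rewrite -[RHS]mul1mx -(mulVmx Mu) -mulmxA MN mulmx1.
  apply: RHinf_mx_block => //.
  + by apply: RHinf_mxD; [apply: RHinf_mx1 | apply: RHinf_mxM].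
  + by apply: RHinf_mxD => //; apply: RHinf_mxM => //; apply: RHinf_mxM.
  + by apply: RHinf_mxD; [apply: RHinf_mx1 | apply: RHinf_mxM].
- move=> [Kh [hs ->]]; move: hs; rewrite /stabilizing /= => -[Mu hN].
  have MN := mulmxV Mu; have NM := mulVmx Mu.
  move: hN MN NM; set N := invmx _ => hN; clearbody N.
  rewrite -(submxK N) !mulmx_block (scalar_mx_block r m 1).
  case/eq_block_mx => e1 e2 e3 e4; case/eq_block_mx => f1 f2 f3 f4.
  have N3E : dlsubmx N = drsubmx N *m Kh.
    by move: f3; rewrite mulmx1 mulmxN => /eqP; rewrite subr_eq0 => /eqP.
  have N4E : drsubmx N = 1%:M + dlsubmx N *m Ghat.
    by move: f4; rewrite mulmxN mulmx1 addrC => /eqP; rewrite subr_eq => /eqP.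
  have hN3 : RHinf_mx (dlsubmx N) by apply: RHinf_mx_dl.
  have u4 : drsubmx N \in unitmx.
    have h : drsubmx N *m (1%:M - Kh *m Ghat) = 1%:M.
      rewrite mulmxBr mulmx1 (mulmxA (drsubmx N)) -N3E.
      by move: f4; rewrite mulmxN mulmx1 addrC.
    exact: (proj1 (mulmx1_unit h)).
  exists (dlsubmx N *m X); split.
  + exact: RHinf_mxM.
  + by rewrite -mulmxA X4 mulmx0.
  + by rewrite -mulmxA X3 -N4E.
  + by rewrite -mulmxA X3 -N4E N3E !mulmxA (mulVmx u4) mul1mx.
Qed.
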